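(* Let $G$ be a connected graph. (1) If $\gamma_P(G) = \gamma(G)$, then $\gamma_P(G \Box P_n) = \gamma(G)$ for every path $P_n$ with $n\ge 1$ vertices. (2) If $\gamma_P(G) = Z(G)$ and $H$ is a connected graph with $\gamma(H) = 1$, then $\gamma_P(G \Box H) = Z(G)$. (3) If $H$ is a connected graph with $v_s(G) = \gamma(G)$ and $v_s(H) = Z(H)$, then $\gamma_P(G \Box H) = \gamma(G)Z(H)$.
   Context: $\gamma(G)$ is the domination number. Zero forcing: starting from an observed set, repeatedly any vertex that is the only unobserved neighbor of some observed vertex becomes observed; $Z(G)$ is the minimum size of a set that eventually observes all vertices. Power domination: for $S\subseteq V(G)$, first all vertices of $S$ and their neighbors are observed, then the zero forcing rule is applied repeatedly; $\gamma_P(G)$ is the minimum size of an $S$ that eventually observes all vertices. A strong support vertex is a vertex adjacent to at least two leaves; $v_s(G)$ is the number of strong support vertices of $G$. $P_n$ is the path on $n$ vertices. $G\Box H$ is the Cartesian product: vertex set $V(G)\times V(H)$, with $(g_1,h_1)\sim(g_2,h_2)$ iff ($g_1=g_2$ and $h_1h_2\in E(H)$) or ($h_1=h_2$ and $g_1g_2\in E(G)$). *)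

(* Defs.v *)
From mathcomp Require Import all_boot.
Set Implicit Arguments. Unset Strict Implicit. Unset Printing Implicit Defensive.

Section Graphs.
Variables (T : finType) (e : rel T).

Definition simple_graph : Prop := symmetric e /\ irreflexive e.

Definition connected_graph : Prop := 0 < #|T| /\ forall x y : T, connect e x y.

Definition closed_nbhd (S : {set T}) : {set T} :=
  S :|: [set y | [exists x in S, e x y]].

Definition dominating (S : {set T}) : bool := closed_nbhd S == setT.

Definition zf_step (S : {set T}) : {set T} :=
  S :|: [set v | [exists u in S,
           [&& e u v, v \notin S & [forall w, e u w ==> (w \in S) || (w == v)]]]].

(* the set of vertices eventually observed (the rule is monotone, so the
   result is independent of the order; #|T| rounds suffice) *)
Definition zf_closure (S : {set T}) : {set T} := iter #|T| zf_step S.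

Definition zero_forcing_set (S : {set T}) : bool := zf_closure S == setT.

Definition power_dominating (S : {set T}) : bool :=
  zf_closure (closed_nbhd S) == setT.

(* minimum sizes; setT always qualifies so #|T| is a valid upper default *)
Definition domination_number : nat :=
  \big[minn/#|T|]_(S : {set T} | dominating S) #|S|.
Definition zero_forcing_number : nat :=
  \big[minn/#|T|]_(S : {set T} | zero_forcing_set S) #|S|.
Definition power_domination_number : nat :=
  \big[minn/#|T|]_(S : {set T} | power_dominating S) #|S|.

Definition leaf (x : T) : bool := #|[set y | e x y]| == 1.
Definition strong_support (v : T) : bool := 1 < #|[set y | e v y & leaf y]|.
Definition num_strong_support : nat := #|[set v | strong_support v]|.

End Graphs.

Definition box_rel (T1 T2 : finType) (e1 : rel T1) (e2 : rel T2) : rel (T1 * T2) :=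
  fun x y => ((x.1 == y.1) && e2 x.2 y.2) || ((x.2 == y.2) && e1 x.1 y.1).

Definition path_rel (n : nat) : rel 'I_n :=
  fun i j => (i.+1 == j :> nat) || (j.+1 == i :> nat).
Arguments path_rel n : clear implicits.

(* Main.v *)
Require Import Defs.
From mathcomp Require Import all_boot.
Set Implicit Arguments. Unset Strict Implicit. Unset Printing Implicit Defensive.

Section Iter.
Variables (T : finType) (f : {set T} -> {set T}).
Hypothesis fext : forall A : {set T}, A \subset f A.
Hypothesis fmon : forall A B : {set T}, A \subset B -> f A \subset f B.

Lemma iter_sub (S : {set T}) k : S \subset iter k f S.
Proof. elim: k => [|k IH] //=; exact: subset_trans IH (fext _). Qed.

Lemma iter_least (S F : {set T}) k : S \subset F -> f F \subset F -> iter k f S \subset F.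
Proof.
move=> SF fF; elim: k => [|k IH] //=.
exact: subset_trans (fmon IH) fF.
Qed.

Lemma iter_fix (S : {set T}) : f (iter #|T| f S) = iter #|T| f S.
Proof.
have H : forall k, f (iter k f S) = iter k f S \/ k <= #|iter k f S|.
  elim=> [|k [IH|IH]]; first by right.
    by left; rewrite /= !IH.
  case: (f (iter k f S) =P iter k f S) => [E|NE].
    by left; rewrite /= !E.
  right; rewrite /=.
  have : iter k f S \proper f (iter k f S).
    by rewrite properEneq fext andbT; apply/eqP => E; apply: NE; rewrite -E.
  move/proper_card => lt; exact: leq_ltn_trans IH lt.
case: (H #|T|) => // Hc.
have E : iter #|T| f S = setT.
  by apply/eqP; rewrite eqEcard subsetT cardsT.
rewrite E; apply/eqP; rewrite eqEsubset subsetT fext //.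
Qed.
End Iter.

Section ZF.
Variables (T : finType) (e : rel T).

Lemma zf_step_ext (A : {set T}) : A \subset zf_step e A.
Proof. exact: subsetUl. Qed.

Lemma zf_stepE (S : {set T}) v : v \in zf_step e S ->
  v \in S \/ exists u, [/\ u \in S, e u v & forall w, e u w -> w \in S \/ w = v].
Proof.
rewrite /zf_step inE => /orP [->|]; first by left.
rewrite inE => /existsP [u /andP [uS /and3P [euv _ /forallP H]]].
right; exists u; split => // w euw.
by move: (H w); rewrite euw /= => /orP [->|/eqP ->]; [left|right].
Qed.

Lemma zf_step_force (S : {set T}) u v : u \in S -> e u v ->
  (forall w, e u w -> w \in S \/ w = v) -> v \in zf_step e S.
Proof.
move=> uS euv H; rewrite /zf_step inE.
case vS: (v \in S) => //=.
rewrite inE; apply/existsP; exists u; rewrite uS euv vS /=.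
apply/forallP => w; apply/implyP => euw.
by case: (H w euw) => [->|->] //; rewrite eqxx orbT.
Qed.

Lemma zf_step_mono (A B : {set T}) : A \subset B -> zf_step e A \subset zf_step e B.
Proof.
move=> AB; apply/subsetP => v /zf_stepE [vA|[u [uA euv H]]].
  by apply: (subsetP (zf_step_ext B)); apply: (subsetP AB).
apply: (zf_step_force (subsetP AB _ uA) euv) => w euw.
by case: (H w euw) => [wA|->]; [left; apply: (subsetP AB)|right].
Qed.

Lemma cl_sub (S : {set T}) : S \subset zf_closure e S.
Proof. exact: (iter_sub zf_step_ext). Qed.

Lemma cl_force (S : {set T}) u v : u \in zf_closure e S -> e u v ->
  (forall w, e u w -> w \in zf_closure e S \/ w = v) -> v \in zf_closure e S.
Proof.
move=> uC euv H; rewrite /zf_closure -(iter_fix zf_step_ext).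
exact: zf_step_force uC euv H.
Qed.

Lemma cl_least (S F : {set T}) : S \subset F ->
  (forall u v, u \in F -> e u v -> (forall w, e u w -> w \in F \/ w = v) -> v \in F) ->
  zf_closure e S \subset F.
Proof.
move=> SF H; apply: (iter_least zf_step_mono) => //.
apply/subsetP => v /zf_stepE [//|[u [uF euv Hw]]]; exact: H uF euv Hw.
Qed.

Lemma nbhdE (S : {set T}) y : y \in closed_nbhd e S -> y \in S \/ exists2 x, x \in S & e x y.
Proof.
rewrite /closed_nbhd inE => /orP [->|]; first by left.
by rewrite inE => /existsP [x /andP [xS exy]]; right; exists x.
Qed.

Lemma nbhd_in (S : {set T}) y : y \in S -> y \in closed_nbhd e S.
Proof. by move=> yS; rewrite /closed_nbhd inE yS. Qed.

Lemma nbhd_adj (S : {set T}) x y : x \in S -> e x y -> y \in closed_nbhd e S.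
Proof.
move=> xS exy; rewrite /closed_nbhd inE; apply/orP; right.
by rewrite inE; apply/existsP; exists x; rewrite xS.
Qed.

Lemma setT_pd : power_dominating e setT.
Proof.
rewrite /power_dominating eqEsubset subsetT /=.
apply: subset_trans (cl_sub _); apply/subsetP => y _; exact: nbhd_in.
Qed.
Lemma setT_dom : dominating e setT.
Proof. by rewrite /dominating eqEsubset subsetT /=; apply/subsetP => y _; exact: nbhd_in. Qed.
Lemma setT_zf : zero_forcing_set e setT.
Proof. by rewrite /zero_forcing_set eqEsubset subsetT /= cl_sub. Qed.
End ZF.

Section BigMin.
Variables (I : finType) (P : pred I) (F : I -> nat) (d : nat).

Lemma bigmin_attained : (exists2 i, P i & F i = d) ->
  exists2 i, P i & \big[minn/d]_(j | P j) F j = F i.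
Proof.
move=> [i0 Pi0 Fi0].
apply: (big_ind (fun m => exists2 i, P i & m = F i)).
- by exists i0.
- move=> x y [i Pi ->] [j Pj ->]; case: (leqP (F i) (F j)) => h.
    by exists i => //; rewrite (minn_idPl h).
  by exists j => //; rewrite (minn_idPr (ltnW h)).
- by move=> i Pi; exists i.
Qed.

Lemma bigmin_le i : P i -> \big[minn/d]_(j | P j) F j <= F i.
Proof.
move=> Pi; have : i \in index_enum I by rewrite mem_index_enum.
elim: (index_enum I) => [|j s IH] //=; rewrite inE big_cons.
case/orP => [/eqP <-|/IH h]; first by rewrite Pi geq_minl.
by case: (P j) => //; rewrite geq_min h orbT.
Qed.
End BigMin.

Section Prod.
Variables (T T' : finType) (e : rel T) (e' : rel T').
Notation be := (box_rel e e').

Lemma pd_proj (S : {set T * T'}) (y0 : T') :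
  power_dominating be S -> power_dominating e ((@fst T T') @: S).
Proof.
move=> /eqP pdS.
set P := (@fst T T') @: S; set C := zf_closure e (closed_nbhd e P).
have sub : zf_closure be (closed_nbhd be S) \subset [set p | p.1 \in C].
  apply: cl_least.
  - apply/subsetP => p /nbhdE [pS | [x xS exp]]; rewrite inE;
      apply: (subsetP (cl_sub _ _)).
      by apply: nbhd_in; apply/imsetP; exists p.
    move: exp; rewrite /box_rel => /orP [/andP [/eqP E _]| /andP [_ ex]].
      by apply: nbhd_in; apply/imsetP; exists x.
    by apply: (nbhd_adj (x := x.1)) => //; apply/imsetP; exists x.
  - move=> u v; rewrite !inE => uF.
    rewrite /box_rel => /orP [/andP [/eqP E _]|/andP [/eqP E euv]] H.
      by rewrite -E.
    apply: (cl_force uF euv) => w euw.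
    have := H (w, u.2); rewrite /box_rel /= eqxx euw orbT => /(_ isT) [|E2].
      by rewrite inE => ->; left.
    by right; rewrite -E2.
rewrite /power_dominating eqEsubset subsetT /=; apply/subsetP => x _.
have : (x, y0) \in zf_closure be (closed_nbhd be S) by rewrite pdS inE.
by move/(subsetP sub); rewrite inE.
Qed.

Lemma pd_ubA (D : {set T}) (Z : {set T'}) :
  dominating e D -> zero_forcing_set e' Z -> power_dominating be (setX D Z).
Proof.
move=> /eqP Ddom /eqP Zzf.
set C := zf_closure be (closed_nbhd be (setX D Z)).
have H : zf_closure e' Z \subset [set y | [forall x, (x, y) \in C]].
  apply: cl_least.
  - apply/subsetP => z zZ; rewrite inE; apply/forallP => x.
    apply: (subsetP (cl_sub _ _)).
    have : x \in closed_nbhd e D by rewrite Ddom inE.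
    case/nbhdE => [xD | [d dD edx]].
      by apply: nbhd_in; rewrite in_setX xD zZ.
    apply: (nbhd_adj (x := (d, z))); first by rewrite in_setX dD zZ.
    by rewrite /box_rel /= eqxx edx orbT.
  - move=> u v; rewrite inE => /forallP uF euv H; rewrite inE; apply/forallP => x.
    apply: (cl_force (u := (x, u))) => //; first by rewrite /box_rel /= eqxx euv.
    move=> [w1 w2]; rewrite /box_rel /= => /orP [/andP [/eqP <- euw]| /andP [/eqP <- exw]].
      case: (H w2 euw) => [|->]; last by right.
      by rewrite inE => /forallP h; left; exact: h.
    by left; exact: uF w1.
rewrite /power_dominating eqEsubset subsetT /=; apply/subsetP => [[x y]] _.
have : y \in zf_closure e' Z by rewrite Zzf inE.
by move/(subsetP H); rewrite inE => /forallP; apply.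
Qed.

Lemma pd_ubB (Z : {set T}) (D : {set T'}) :
  zero_forcing_set e Z -> dominating e' D -> power_dominating be (setX Z D).
Proof.
move=> /eqP Zzf /eqP Ddom.
set C := zf_closure be (closed_nbhd be (setX Z D)).
have H : zf_closure e Z \subset [set x | [forall y, (x, y) \in C]].
  apply: cl_least.
  - apply/subsetP => z zZ; rewrite inE; apply/forallP => y.
    apply: (subsetP (cl_sub _ _)).
    have : y \in closed_nbhd e' D by rewrite Ddom inE.
    case/nbhdE => [yD | [d dD edy]].
      by apply: nbhd_in; rewrite in_setX yD zZ.
    apply: (nbhd_adj (x := (z, d))); first by rewrite in_setX dD zZ.
    by rewrite /box_rel /= eqxx edy.
  - move=> u v; rewrite inE => /forallP uF euv H; rewrite inE; apply/forallP => y.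
    apply: (cl_force (u := (u, y))) => //; first by rewrite /box_rel /= eqxx euv orbT.
    move=> [w1 w2]; rewrite /box_rel /= => /orP [/andP [/eqP <- eyw]| /andP [/eqP <- euw]].
      by left; exact: uF w2.
    case: (H w1 euw) => [|->]; last by right.
    by rewrite inE => /forallP h; left; exact: h.
rewrite /power_dominating eqEsubset subsetT /=; apply/subsetP => [[x y]] _.
have : x \in zf_closure e Z by rewrite Zzf inE.
by move/(subsetP H); rewrite inE => /forallP; apply.
Qed.
End Prod.

Definition blk (T : finType) (e : rel T) (v : T) : {set T} :=
  [set y | (y == v) || (e v y && leaf e y)].

Lemma leaf_nb (T : finType) (e : rel T) (v q x : T) :
  symmetric e -> leaf e x -> e v x -> e q x -> q = v.
Proof.
move=> sym /cards1P [z Hz] evx eqx.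
have : v \in [set y | e x y] by rewrite inE sym.
have : q \in [set y | e x y] by rewrite inE sym.
by rewrite Hz => /set1P -> /set1P ->.
Qed.

Lemma ss_not_leaf (T : finType) (e : rel T) v : strong_support e v -> ~~ leaf e v.
Proof.
rewrite /strong_support /leaf => h; apply/negP => /eqP h1.
have : #|[set y | e v y & leaf e y]| <= #|[set y | e v y]|.
  by apply: subset_leq_card; apply/subsetP => y; rewrite !inE => /andP [].
by rewrite h1 leqNgt h.
Qed.

Lemma blk_disj (T : finType) (e : rel T) v v' x :
  symmetric e -> strong_support e v -> strong_support e v' ->
  x \in blk e v -> x \in blk e v' -> v = v'.
Proof.
move=> sym sv sv'; rewrite !inE => /orP [/eqP xv|/andP [evx lx]] /orP [/eqP xv'|/andP [evx' lx']].
- by rewrite -xv -xv'.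
- by move: (ss_not_leaf sv); rewrite -xv lx'.
- by move: (ss_not_leaf sv'); rewrite -xv' lx.
- by apply: (leaf_nb sym lx evx').
Qed.

Lemma other (T : finType) (a b x : T) : a != b -> x \in [set a; b] ->
  exists2 x', x' \in [set a; b] & x' != x.
Proof.
move=> ab /set2P [->|->]; [exists b | exists a]; rewrite ?inE ?eqxx ?orbT //.
by rewrite eq_sym.
Qed.

Section Block.
Variables (T T' : finType) (e : rel T) (e' : rel T').
Hypotheses (sym : symmetric e) (sym' : symmetric e').
Notation be := (box_rel e e').

Lemma ss_block (S : {set T * T'}) v w :
  power_dominating be S -> strong_support e v -> strong_support e' w ->
  S :&: setX (blk e v) (blk e' w) != set0.
Proof.
move=> /eqP pdS sv sw; apply/negP => /eqP SB.
have notSB : forall p, p \in S -> p \in setX (blk e v) (blk e' w) -> False.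
  move=> p pS pB; have : p \in S :&: setX (blk e v) (blk e' w) by rewrite inE pS pB.
  by rewrite SB inE.
move: sv sw; rewrite /strong_support => /card_gt1P [a [b [ha hb ab]]].
move=> /card_gt1P [c [d [hc hd cd]]].
have hab : forall x, x \in [set a; b] -> e v x && leaf e x.
  by move=> x /set2P [->|->]; [move: ha|move: hb]; rewrite inE.
have hcd : forall y, y \in [set c; d] -> e' w y && leaf e' y.
  by move=> y /set2P [->|->]; [move: hc|move: hd]; rewrite inE.
set K := setX [set a; b] [set c; d].
have kB : forall x y, (x, y) \in K -> (x, y) \in setX (blk e v) (blk e' w).
  move=> x y; rewrite !in_setX => /andP [/hab hx /hcd hy].
  by rewrite !inE hx hy !orbT.
have nbK : forall x y q, (x, y) \in K -> be q (x, y) -> q = (v, y) \/ q = (x, w).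
  move=> x y [q1 q2]; rewrite in_setX => /andP [/hab /andP [evx lx] /hcd /andP [ewy ly]].
  rewrite /box_rel /= => /orP [/andP [/eqP -> ew]|/andP [/eqP -> eq1]].
    by right; rewrite (leaf_nb sym' ly ewy ew).
  by left; rewrite (leaf_nb sym lx evx eq1).
have sub : zf_closure be (closed_nbhd be S) \subset ~: K.
  apply: cl_least.
  - apply/subsetP => [[x y]] /nbhdE [pS|[s sS esp]]; rewrite inE; apply/negP => pK.
      exact: notSB pS (kB _ _ pK).
    have := kB _ _ pK; rewrite in_setX => /andP [hbx hby].
    case: (nbK _ _ _ pK esp) => E; apply: (notSB _ sS); rewrite E in_setX.
      by rewrite hby andbT !inE eqxx.
    by rewrite hbx !inE eqxx.
  - move=> u [x y] uF buv H; rewrite inE; apply/negP => pK.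
    have := pK; rewrite in_setX => /andP [xab ycd].
    case: (nbK _ _ _ pK buv) => E; subst u.
      have [x' x'ab x'x] := other ab xab.
      have := H (x', y); rewrite /box_rel /= eqxx /=.
      have := hab _ x'ab => /andP [-> _] /(_ (orbT _)) [|[E]].
        by rewrite inE in_setX x'ab ycd.
      by move: x'x; rewrite E eqxx.
    have [y' y'cd y'y] := other cd ycd.
    have := H (x, y'); rewrite /box_rel /= eqxx /=.
    have := hcd _ y'cd => /andP [-> _] /(_ isT) [|[E]].
      by rewrite inE in_setX y'cd xab.
    by move: y'y; rewrite E eqxx.
have : (a, c) \in zf_closure be (closed_nbhd be S) by rewrite pdS inE.
by move/(subsetP sub); rewrite inE in_setX !inE !eqxx.
Qed.
End Block.

Lemma dom_att (T : finType) (e : rel T) :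
  exists2 D : {set T}, dominating e D & domination_number e = #|D|.
Proof.
apply: (bigmin_attained (P := dominating e) (F := fun S : {set T} => #|S|)).
by exists setT; [apply: setT_dom | rewrite cardsT].
Qed.
Lemma zf_att (T : finType) (e : rel T) :
  exists2 D : {set T}, zero_forcing_set e D & zero_forcing_number e = #|D|.
Proof.
apply: (bigmin_attained (P := zero_forcing_set e) (F := fun S : {set T} => #|S|)).
by exists setT; [apply: setT_zf | rewrite cardsT].
Qed.
Lemma pd_att (T : finType) (e : rel T) :
  exists2 D : {set T}, power_dominating e D & power_domination_number e = #|D|.
Proof.
apply: (bigmin_attained (P := power_dominating e) (F := fun S : {set T} => #|S|)).
by exists setT; [apply: setT_pd | rewrite cardsT].
Qed.
Lemma zf_le (T : finType) (e : rel T) (D : {set T}) :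
  zero_forcing_set e D -> zero_forcing_number e <= #|D|.
Proof. exact: (@bigmin_le _ (zero_forcing_set e) (fun S : {set T} => #|S|) _ D). Qed.
Lemma pd_le (T : finType) (e : rel T) (D : {set T}) :
  power_dominating e D -> power_domination_number e <= #|D|.
Proof. exact: (@bigmin_le _ (power_dominating e) (fun S : {set T} => #|S|) _ D). Qed.

Lemma pd_mono (T T' : finType) (e : rel T) (e' : rel T') (y0 : T') :
  power_domination_number e <= power_domination_number (box_rel e e').
Proof.
have [S pdS ->] := pd_att (box_rel e e').
apply: leq_trans (leq_imset_card _ _); apply: pd_le; exact: pd_proj y0 pdS.
Qed.

Lemma ubA (T T' : finType) (e : rel T) (e' : rel T') :
  power_domination_number (box_rel e e') <= domination_number e * zero_forcing_number e'.
Proof.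
have [D hD ->] := dom_att e; have [Z hZ ->] := zf_att e'.
rewrite -cardsX; apply: pd_le; exact: pd_ubA.
Qed.

Lemma ubB (T T' : finType) (e : rel T) (e' : rel T') :
  power_domination_number (box_rel e e') <= zero_forcing_number e * domination_number e'.
Proof.
have [Z hZ ->] := zf_att e; have [D hD ->] := dom_att e'.
rewrite -cardsX; apply: pd_le; exact: pd_ubB.
Qed.

Lemma lb3 (T T' : finType) (e : rel T) (e' : rel T') :
  symmetric e -> symmetric e' ->
  num_strong_support e * num_strong_support e' <= power_domination_number (box_rel e e').
Proof.
move=> sym sym'.
have [S pdS ->] := pd_att (box_rel e e').
rewrite /num_strong_support -cardsX.
set SS := setX _ _.
pose g (p : T * T') := odflt p [pick q in S :&: setX (blk e p.1) (blk e' p.2)].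
have gP : forall p, p \in SS -> g p \in S :&: setX (blk e p.1) (blk e' p.2).
  move=> [v w]; rewrite in_setX => /andP [sv sw]; rewrite !inE in sv sw.
  rewrite /g; case: pickP => [q0 //|none] /=.
  move: (ss_block sym sym' pdS sv sw) => /set0Pn [r hr].
  by move: (none r); rewrite hr.
have inj : {in SS &, injective g}.
  move=> [v w] [v' w'] hp hp' E.
  have := gP _ hp; have := gP _ hp'; rewrite E.
  case: (g (v', w')) => q1 q2; rewrite !in_setI !in_setX /= => /andP [_ /andP [h1 h2]] /andP [_ /andP [h3 h4]].
  move: hp hp'; rewrite !in_setX !inE => /andP [sv sw] /andP [sv' sw'].
  by rewrite (blk_disj sym sv sv' h3 h1) (blk_disj sym' sw sw' h4 h2).
rewrite -(card_in_imset inj); apply: subset_leq_card.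
apply/subsetP => _ /imsetP [p hp ->].
by have := gP _ hp; rewrite inE => /andP [].
Qed.

Lemma path_zf n (h0 : 0 < n) : zero_forcing_number (path_rel n) <= 1.
Proof.
apply: leq_trans (zf_le (D := [set Ordinal h0]) _) _; last by rewrite cards1.
rewrite /zero_forcing_set eqEsubset subsetT /=; apply/subsetP => j _.
have main : forall k (j : 'I_n), j <= k -> j \in zf_closure (path_rel n) [set Ordinal h0].
  elim=> [|k IH] j'.
    rewrite leqn0 => /eqP j0; apply: (subsetP (cl_sub _ _)).
    by rewrite inE; apply/eqP/val_inj => /=.
  rewrite leq_eqVlt => /orP [/eqP jk|]; last by rewrite ltnS; apply: IH.
  have kn : k < n by apply: leq_ltn_trans (leqnSn k) _; rewrite -jk ltn_ord.
  apply: (cl_force (u := Ordinal kn)); first by apply: IH.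
    by rewrite /path_rel /= jk eqxx.
  move=> w; rewrite /path_rel /= => /orP [/eqP wk|/eqP wk].
    by right; apply/val_inj => /=; rewrite -wk jk.
  by left; apply: IH; rewrite -wk leqnSn.
exact: main j (leqnn _).
Qed.


Theorem corollary3p9 (T : finType) (e : rel T) :
  simple_graph e -> connected_graph e ->
  (* (1) *)
  (power_domination_number e = domination_number e ->
     forall n : nat, 1 <= n ->
       power_domination_number (box_rel e (path_rel n)) = domination_number e)
  /\
  (* (2) *)
  (forall (T' : finType) (e' : rel T'),
     simple_graph e' -> connected_graph e' ->
     power_domination_number e = zero_forcing_number e ->
     domination_number e' = 1 ->
     power_domination_number (box_rel e e') = zero_forcing_number e)
  /\
  (* (3) *)
  (forall (T' : finType) (e' : rel T'),
     simple_graph e' -> connected_graph e' ->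
     num_strong_support e = domination_number e ->
     num_strong_support e' = zero_forcing_number e' ->
     power_domination_number (box_rel e e') =
       domination_number e * zero_forcing_number e').
Proof.
move=> [sym _] _; split; [|split].
- move=> Hpd n n1; apply/eqP; rewrite eqn_leq; apply/andP; split.
    apply: leq_trans (ubA _ _) _.
    by rewrite -[X in _ <= X]muln1; apply: leq_mul => //; exact: path_zf.
  by rewrite -Hpd; apply: pd_mono (Ordinal n1).
- move=> T' e' _ [cT' _] Hpd Hd; apply/eqP; rewrite eqn_leq; apply/andP; split.
    by apply: leq_trans (ubB _ _) _; rewrite Hd muln1.
  by rewrite -Hpd; case/card_gt0P: cT' => y0 _; apply: pd_mono y0.
- move=> T' e' [sym' _] _ H1 H2; apply/eqP; rewrite eqn_leq; apply/andP; split.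
    exact: ubA.
  by rewrite -H1 -H2; exact: lb3.
Qed.
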